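(* Let $X$ be a hereditarily meta-Lindelöf, compact, scattered space with countable scattered height. If $X$ has a $P$-base for some directed set $P$ with calibre $(\omega_1,\omega)$, then $X$ is countable, hence metrizable.
   Context: All spaces are Tychonoff. $X$ is hereditarily meta-Lindelöf if every open cover of any subspace has a point-countable open refinement. $X$ is scattered if every nonempty subspace has an isolated point; for $A\subseteq X$ let $A'$ be the set of non-isolated points of $A$, set $X^{(0)}=X$, $X^{(\alpha)}=\bigcap_{\beta<\alpha}(X^{(\beta)})'$ for $\alpha>0$; for $x\in X$, $h(x)$ is the ordinal with $x\in X^{(h(x))}\setminus X^{(h(x)+1)}$, and the scattered height is $h(X)=\sup\{h(x):x\in X\}$. A $P$-base is an assignment to each $x\in X$ of a neighborhood base $\{U_p:p\in P\}$ at $x$ with $U_p\subseteq U_{p'}$ whenever $p\ge p'$. A directed set has calibre $(\omega_1,\omega)$ if every uncountable subset contains an infinite subset with an upper bound. *)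

(* Defs.v *)
From HB Require Import structures.
From mathcomp Require Import all_boot all_order all_algebra.
From mathcomp Require Import all_classical all_reals all_analysis.
From mathcomp Require Import Rstruct Rstruct_topology.
From Stdlib Require Import Reals.
Set Implicit Arguments. Unset Strict Implicit. Unset Printing Implicit Defensive.
Import Order.TTheory GRing.Theory Num.Theory.
Local Open Scope classical_set_scope.

Definition completely_regular (X : topologicalType) : Prop :=
  forall (A : set X) (x : X), closed A -> ~ A x ->
    exists f : X -> Rdefinitions.R,
      continuous f /\ f x = 0%R /\ (forall y, A y -> f y = 1%R).

Definition tychonoff_space (X : topologicalType) : Prop :=
  hausdorff_space X /\ completely_regular X.

Definition open_in {X : topologicalType} (Y V : set X) : Prop :=
  exists W : set X, open W /\ V = W `&` Y.

Definition hered_meta_lindelof (X : topologicalType) : Prop :=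
  forall (Y : set X) (U : set (set X)),
    (forall u, U u -> open_in Y u) -> \bigcup_(u in U) u = Y ->
    exists V : set (set X),
      (forall v, V v -> open_in Y v) /\
      \bigcup_(v in V) v = Y /\
      (forall v, V v -> exists2 u, U u & v `<=` u) /\
      (forall y, Y y -> countable [set v | V v /\ v y]).

Definition isolated_in {X : topologicalType} (A : set X) (x : X) : Prop :=
  A x /\ exists U : set X, open U /\ U `&` A = [set x].

Definition scattered (X : topologicalType) : Prop :=
  forall A : set X, A !=set0 -> exists x, isolated_in A x.

Definition derived {X : topologicalType} (A : set X) : set X :=
  [set x | A x /\ ~ isolated_in A x].

Definition well_order {W : Type} (lt : W -> W -> Prop) : Prop :=
  well_founded lt /\
  (forall a b c, lt a b -> lt b c -> lt a c) /\
  (forall a b, lt a b \/ a = b \/ lt b a).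

(* By well-founded recursion, D w = X^(alpha) where alpha is the order type
   of the initial segment below w. *)
Definition CB_hierarchy {X : topologicalType} {W : Type}
    (lt : W -> W -> Prop) (D : W -> set X) : Prop :=
  forall w, D w = \bigcap_(v in [set v | lt v w]) derived (D v).

(* X has countable scattered height: there is a countable ordinal alpha
   (represented by a countable well-order W) such that every point x has
   h(x) < alpha, i.e. x leaves the hierarchy before alpha. *)
Definition countable_height (X : topologicalType) : Prop :=
  exists (W : Type) (lt : W -> W -> Prop) (D : W -> set X),
    well_order lt /\ countable [set: W] /\ CB_hierarchy lt D /\
    (forall x : X, exists w, ~ D w x).

Definition directed_set {P : Type} (le : P -> P -> Prop) : Prop :=
  (forall p, le p p) /\
  (forall p q r, le p q -> le q r -> le p r) /\
  (forall p q, exists r, le p r /\ le q r).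

Definition calibre_w1_w {P : Type} (le : P -> P -> Prop) : Prop :=
  forall S : set P, ~ countable S ->
    exists T : set P, T `<=` S /\ infinite_set T /\
      exists p, forall t, T t -> le t p.

Definition has_Pbase (X : topologicalType) {P : Type}
    (le : P -> P -> Prop) : Prop :=
  exists U : X -> P -> set X,
    forall x : X,
      (forall p, nbhs x (U x p)) /\
      (forall N, nbhs x N -> exists p, U x p `<=` N) /\
      (forall p p', le p' p -> U x p `<=` U x p').

Definition metrizable_space (X : topologicalType) : Prop :=
  exists d : X -> X -> Rdefinitions.R,
    (forall x y, (0 <= d x y)%R) /\
    (forall x y, d x y = 0%R <-> x = y) /\
    (forall x y, d x y = d y x) /\
    (forall x y z, (d x z <= d x y + d y z)%R) /\
    (forall A : set X, open A <->
       forall x, A x -> exists e : Rdefinitions.R, (0 < e)%R /\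
         [set y | (d x y < e)%R] `<=` A).

(* Main.v *)
Require Import Defs.
From mathcomp Require Import all_boot all_order all_algebra.
From mathcomp Require Import all_classical all_reals all_analysis.
From mathcomp Require Import Rstruct Rstruct_topology.
From HB Require Import structures.
Import Order.TTheory GRing.Theory Num.Theory.
Local Open Scope classical_set_scope.
Set Implicit Arguments. Unset Strict Implicit. Unset Printing Implicit Defensive.
Lemma countable_subset T (A B : set T) : A `<=` B -> countable B -> countable A.
Proof. by move=> AB; apply: sub_countable; apply: subset_card_le. Qed.

Lemma countableU2 T (A B : set T) : countable A -> countable B -> countable (A `|` B).
Proof.
move=> cA cB.
have -> : A `|` B = \bigcup_(i in [set: bool]) (if i then A else B).
  apply/seteqP; split => [z [Az|Bz]|z [[] _ ?]]; [by exists true | by exists false | by left | by right].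
by apply: bigcup_countable; [exact: countableP | case].
Qed.

Fixpoint chain {X : Type} (V : set (set X)) (y : X) (n : nat) : set X :=
  match n with
  | 0 => [set y]
  | n.+1 => chain V y n `|` \bigcup_(v in [set v | V v /\ (v `&` chain V y n) !=set0]) v
  end.
Definition Cl {X : Type} (V : set (set X)) (y : X) := \bigcup_(n in [set: nat]) chain V y n.

Lemma Cl_self {X : Type} (V : set (set X)) y : Cl V y y.
Proof. by exists 0%N. Qed.

Lemma chain_step {X : Type} (V : set (set X)) y v z :
  V v -> v z -> Cl V y z -> v `<=` Cl V y.
Proof.
move=> Vv vz [n _ hn] w vw; exists n.+1 => //; right; exists v => //; split => //.
by exists z.
Qed.

Lemma Cl_trans {X : Type} (V : set (set X)) a z : Cl V a z -> Cl V z `<=` Cl V a.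
Proof.
move=> haz w [n _]; elim: n w => [|n IH] w /=.
  by move=> ->.
case => [/IH//|[v [Vv [t [vt ht]]] vw]].
have H1 := @chain_step X V a v t Vv vt (IH t ht). exact: H1.
Qed.

Lemma Cl_sym {X : Type} (V : set (set X)) a z : Cl V a z -> Cl V z a.
Proof.
move=> [n _]; elim: n z => [|n IH] z /=.
  by move=> ->; exact: Cl_self.
case => [/IH//|[v [Vv [t [vt ht]]] vz]].
have h1 := IH t ht.
have h2 : Cl V z t := chain_step Vv vz (Cl_self V z) vt.
exact: (Cl_trans h2 h1).
Qed.

Lemma Cl_eq {X : Type} (V : set (set X)) a z : Cl V a z -> Cl V z = Cl V a.
Proof.
move=> h; apply/seteqP; split; first exact: Cl_trans.
exact: (Cl_trans (Cl_sym h)).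
Qed.

Lemma chain_sub {X : Type} (V : set (set X)) (Y : set X) y n :
  (forall v, V v -> v `<=` Y) -> Y y -> chain V y n `<=` Y.
Proof.
move=> VY Yy; elim: n => [|n IH] /=; first by move=> z ->.
by move=> z [/IH//|[v [Vv _] vz]]; exact: (VY v Vv).
Qed.

Lemma Cl_sub {X : Type} (V : set (set X)) (Y : set X) y :
  (forall v, V v -> v `<=` Y) -> Y y -> Cl V y `<=` Y.
Proof. by move=> VY Yy z [n _]; apply: chain_sub. Qed.

Lemma Cl_countable {X : Type} (V : set (set X)) (Y : set X) y :
  (forall v, V v -> v `<=` Y) -> (forall v, V v -> countable v) ->
  (forall z, Y z -> countable [set v | V v /\ v z]) -> Y y ->
  countable (Cl V y).
Proof.
move=> VY Vc pc Yy.
have cn : forall n, countable (chain V y n).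
  elim => [|n IH] /=; first exact: countable1.
  apply: countableU2 => //.
  apply: (@countable_subset _ _ (\bigcup_(w in chain V y n) \bigcup_(v in [set v | V v /\ v w]) v)).
    by move=> z [v [Vv [w [vw hw]]] vz]; exists w => //; exists v.
  apply: bigcup_countable => // w hw.
  apply: bigcup_countable; first exact: pc (chain_sub VY Yy hw).
  by move=> v [Vv _]; exact: Vc.
by apply: bigcup_countable => //; exact: countableP.
Qed.
Definition pX (X : topologicalType) (x : X) : Type := X.
HB.instance Definition _ (X : topologicalType) (x : X) := Topological.on (@pX X x).
HB.instance Definition _ (X : topologicalType) (x : X) := isPointed.Build (@pX X x) x.

Lemma cover_of (X : topologicalType) (x : X) (A : set X) : compact A -> cover_compact A.
Proof.
move=> cA.
have : @compact (pX x) A by exact: cA.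
by rewrite (@compact_cover (pX x)).
Qed.

Lemma core (X : topologicalType) (P : Type) (le : P -> P -> Prop) (u : P -> set X)
  (x : X) (K : set X) :
  hausdorff_space X -> hered_meta_lindelof X -> compact [set: X] -> calibre_w1_w le ->
  (forall p, nbhs x (u p)) -> (forall N, nbhs x N -> exists p, u p `<=` N) ->
  (forall p p', le p' p -> u p `<=` u p') ->
  closed K ->
  (forall y, K y -> y <> x -> exists G, [/\ open G, G y & countable G]) -> countable K.
Proof.
move=> hX hml cX cal unb ubase umono cK hK.
pose Y := K `\ x.
pose UU := [set w | exists G, [/\ open G, countable G & w = G `&` Y]].
have UUo : forall w, UU w -> open_in Y w by move=> w [G [oG _ ->]]; exists G.
have UUc : \bigcup_(w in UU) w = Y.
  apply/seteqP; split; first by move=> z [w [G [_ _ ->]] []].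
  move=> z Yz; have [Kz zx] := Yz; have [G [oG Gz cG]] := hK z Kz zx.
  by exists (G `&` Y) => //; exists G.
have [V [Vo [Vc [Vr Vpc]]]] := hml Y UU UUo UUc.
have VY : forall v, V v -> v `<=` Y by move=> v /Vo [W [_ ->]] z [].
have Vcnt : forall v, V v -> countable v.
  move=> v /Vr [w [G [_ cG ->]] vw]; apply: (countable_subset vw).
  by apply: (countable_subset _ cG) => z [].
have ClY : forall y, Y y -> Cl V y `<=` Y by move=> y Yy; exact: Cl_sub.
have Clc : forall y, Y y -> countable (Cl V y).
  by move=> y Yy; apply: (Cl_countable VY Vcnt Vpc Yy).
pose Wc y := \bigcup_(W in [set W | open W /\ W `&` Y `<=` Cl V y]) W.
have Wco : forall y, open (Wc y) by move=> y; apply: bigcup_open => W [].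
have WcY : forall y, Wc y `&` Y `<=` Cl V y.
  by move=> y z [[W [_ hW] Wz] Yz]; apply: hW.
have Wcz : forall z, Y z -> Wc z z.
  move=> z Yz; move: (Yz); rewrite -Vc => -[v Vv vz].
  have [W [oW vE]] := Vo v Vv.
  exists W; last by move: vz; rewrite vE => -[].
  split => // w hw; have H1 := @chain_step X V z v z Vv vz (Cl_self V z).
  by apply: H1; rewrite vE.
pose E q := K `&` ~` interior (u q).
have Ecpt : forall q, compact (E q).
  move=> q; apply: (subclosed_compact _ cX) => //.
  by apply: closedI => //; apply: open_closedC; exact: open_interior.
have EY : forall q, E q `<=` Y.
  move=> q z [Kz nz]; split => //= zx; apply: nz; rewrite zx; exact: unb.
pose CC := [set C | exists2 y, Y y & C = Cl V y].
have CCY : forall C, CC C -> C `<=` Y by move=> C [y Yy ->]; exact: ClY.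
have fin : forall q, finite_set [set C | CC C /\ (C `&` E q) !=set0].
  move=> q; have := cover_of x (Ecpt q).
  move=> /(_ X Y Wc).
  case => [y _|z /EY Yz|D' D'Y cov]; first exact: Wco.
    by exists z => //; exact: Wcz.
  apply: (sub_finite_set _ (finite_image (Cl V) (finite_fset D'))).
  move=> C [[y Yy ->] [z [Clyz Ez]]]; have [w D'w Wwz] := cov z Ez.
  exists w => //.
  have Clwz : Cl V w z by apply: WcY; split => //; exact: (EY q z Ez).
  by rewrite -(Cl_eq Clwz) (Cl_eq Clyz).
case: (pselect (countable K)) => // ncK; exfalso.
have ncY : ~ countable Y.
  move=> cY; apply: ncK; apply: (countable_subset _ (countableU2 cY (countable1 x))).
  by move=> z Kz; case: (pselect (z = x)) => [->|zx]; [right | left; split].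
have ncCC : ~ countable CC.
  have Cc : forall C, CC C -> countable C by move=> C [y Yy ->]; exact: Clc.
  move=> cC; apply: ncY; apply: (countable_subset _ (bigcup_countable cC Cc)).
  by move=> z Yz; exists (Cl V z); [exists z | exact: Cl_self].
have [p0 _] := ubase setT filterT.
have : forall C, exists p, CC C -> exists2 r, C r & ~ u p r.
  move=> C; case: (pselect (CC C)) => [[y Yy ->]|nC]; last by exists p0.
  have [Ky yx] := Yy.
  have xy : x != y by apply/eqP => h; apply: yx; rewrite h.
  move: hX; rewrite open_hausdorff => /(_ x y xy) [[A B] /= [xA yB] [oA oB AB0]].
  have nA : nbhs x A by apply: open_nbhs_nbhs; split => //; move: xA; rewrite inE.
  have [p up] := ubase A nA.
  exists p => _; exists y; first exact: Cl_self.
  move=> /up Ay; move/eqP: AB0 => AB0.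
  have : (A `&` B) y by split => //; move: yB; rewrite inE.
  by rewrite AB0.
move/choice => [g hg].
have ncg : ~ countable (g @` CC).
  move=> cg; apply: ncCC.
  apply: (countable_subset _ (bigcup_countable cg (fun p _ => finite_set_countable (fin p)))).
  move=> C CCC; exists (g C); first by exists C.
  split => //; have [r Cr nur] := hg C CCC.
  exists r; split => //; split; first by have [] := CCY C CCC r Cr.
  by move=> /interior_subset.
have [T [TS [Tinf [q Tq]]]] := cal _ ncg.
apply: Tinf; apply: (sub_finite_set _ (finite_image g (fin q))).
move=> t Tt; have [C CCC gC] := TS t Tt.
exists C => //; split => //; have [r Cr nur] := hg C CCC.
exists r; split => //; split; first by have [] := CCY C CCC r Cr.
move=> /interior_subset /(umono _ _ (Tq t Tt)); rewrite -gC; exact: nur.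
Qed.

Lemma countable_main (X : topologicalType) (P : Type) (le : P -> P -> Prop) :
  hausdorff_space X -> hered_meta_lindelof X -> compact [set: X] -> scattered X ->
  calibre_w1_w le -> has_Pbase X le -> countable [set: X].
Proof.
move=> hX hml cX sc cal [U hU].
have loc : forall z : X, exists G : set X, [/\ open G, G z & countable G].
  move=> z0; apply: contrapT => nz.
  pose B := [set z : X | ~ exists G : set X, [/\ open G, G z & countable G]].
  have [x [Bx [Op [oOp OpB]]]] := sc B (ex_intro _ z0 nz).
  have Opx : Op x by have : [set x] x by []; rewrite -OpB => -[].
  have [Ubb [Ubase Ubm]] := hU x.
  have reg := @compact_regular X x setT hX cX filterT.
  have [N Nx NOp] : filter_from (nbhs x) closure Op.
    by apply: reg; apply: open_nbhs_nbhs; split.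
  have hyp : forall y, closure N y -> y <> x -> exists G, [/\ open G, G y & countable G].
    move=> y Ny yx; apply: contrapT => ny.
    have : (Op `&` B) y by split; [exact: NOp | exact: ny].
    by rewrite OpB.
  have cK := @core X P le (U x) x (closure N) hX hml cX cal Ubb Ubase Ubm (@closed_closure X N) hyp.
  apply: Bx; exists (interior N); split; first exact: open_interior.
    exact: Nx.
  apply: (countable_subset _ cK) => z /interior_subset; exact: subset_closure.
have [G hG] := choice loc.
case: (pselect ([set: X] !=set0)) => [[x0 _]|e]; last first.
  by apply: (countable_subset _ (countable0 X)) => z _; apply: e; exists z.
have := cover_of x0 cX => /(_ X setT G).
case => [i _|z _|D' _ cov]; first by have [] := hG i.
  by exists z => //; have [] := hG z.
apply: (countable_subset cov); apply: bigcup_countable; first exact: countable_fset.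
by move=> i _; have [] := hG i.
Qed.

Lemma clopen_sep (X : topologicalType) : tychonoff_space X -> countable [set: X] ->
  forall a b : X, a <> b -> exists C : set X, [/\ open C, closed C, C a & ~ C b].
Proof.
move=> [hX creg] cX a b ab.
have [f [cf [fa fb]]] := creg [set b] a
  (@accessible_closed_set1 X (@hausdorff_accessible X hX) b) ab.
have cr : countable (range f) := sub_countable (card_image_le f setT) cX.
have [r [r0 r1 nr]] : exists r : Rdefinitions.R, [/\ (0 < r)%R, (r < 1)%R & forall z, f z != r].
  apply: contrapT => H.
  have sub : `]0%R, 1%R[%classic `<=` range f.
    move=> r /=; rewrite in_itv /= => /andP [r0 r1]; apply: contrapT => nrg.
    by apply: H; exists r; split => // z; apply/negP => /eqP fz; apply: nrg; exists z.
  have := countable_lebesgue_measure0 (countable_subset sub cr).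
  rewrite lebesgue_measure_itv /= lte_fin ltr01 oppr0 adde0 => -[] /eqP.
  by rewrite oner_eq0.
exists (f @^-1` [set s | (s < r)%R]); split.
- by apply: open_comp; [move=> z _; exact: cf | exact: open_lt].
- have -> : f @^-1` [set s | (s < r)%R] = ~` (f @^-1` [set s | (r < s)%R]).
    apply/seteqP; split => z /=.
      by move=> fr rf; have := lt_trans fr rf; rewrite ltxx.
    move=> h; move: (nr z); rewrite neq_lt => /orP [//|h'].
    by exfalso; apply: h.
  apply: open_closedC; apply: open_comp; [move=> z _; exact: cf | exact: open_gt].
- by rewrite /= fa.
- rewrite /= fb //; move=> h; have := lt_trans h r1; by rewrite ltxx.
Qed.

Lemma sep_family (X : topologicalType) : tychonoff_space X -> countable [set: X] ->
  exists Cn : nat -> set X, (forall n, open (Cn n) /\ closed (Cn n)) /\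
    (forall a b, a <> b -> exists n, Cn n a /\ ~ Cn n b).
Proof.
move=> tX cX.
move/countable_injP: (cX) => [idx idxi].
pose ip (a b : X) : nat := pickle (idx a, idx b).
have ipi : forall a b a' b', ip a b = ip a' b' -> a = a' /\ b = b'.
  move=> a b a' b' /(pcan_inj pickleK) [] h1 h2.
  by split; apply: idxi; rewrite ?in_setT.
have : forall n, exists C : set X, (open C /\ closed C) /\
    (forall a b, a <> b -> ip a b = n -> C a /\ ~ C b).
  move=> n; case: (pselect (exists a b, a <> b /\ ip a b = n)) => [[a [b [ab e]]]|ne].
    have [C [oC cC Ca Cb]] := clopen_sep tX cX ab.
    exists C; split => // a' b' _ e'.
    by have [-> ->] : a' = a /\ b' = b by apply: ipi; rewrite e e'.
  exists setT; split; first by split; [exact: openT | exact: closedT].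
  by move=> a b ab e; exfalso; apply: ne; exists a, b.
move/choice => [Cn hC]; exists Cn; split; first by move=> n; exact: (hC n).1.
by move=> a b ab; exists (ip a b); exact: ((hC _).2 a b ab erefl).
Qed.

Definition sepn {X : Type} (Cn : nat -> set X) n a b : Prop := ~ (Cn n a <-> Cn n b).

Definition mind (Q : nat -> Prop) : nat :=
  match pselect (exists n, `[< Q n >]) with
  | left h => ex_minn h
  | right _ => 0%N
  end.

Lemma mindP Q n : Q n -> Q (mind Q) /\ (mind Q <= n)%N.
Proof.
move=> Qn; rewrite /mind; case: pselect => [h|nh]; last first.
  by exfalso; apply: nh; exists n; apply/asboolP.
case: ex_minnP => m /asboolP Qm hm; split => //; apply: hm; exact/asboolP.
Qed.

Lemma seq_bound (s : seq nat) : exists N, forall n, n \in s -> (n <= N)%N.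
Proof.
elim: s => [|a s [N hN]]; first by exists 0%N.
exists (maxn a N) => n; rewrite in_cons => /orP [/eqP ->|/hN h].
  exact: leq_maxl.
exact: leq_trans h (leq_maxr _ _).
Qed.

Lemma clopen_iff (X : topologicalType) (C : set X) x : open C -> closed C ->
  open [set y | C y <-> C x] /\ open [set y | ~ (C x <-> C y)].
Proof.
move=> oC cC; case: (pselect (C x)) => hx.
  have -> : [set y | C y <-> C x] = C.
    by apply/seteqP; split => y /=; [case=> _ /(_ hx) | move=> hy; split].
  have -> : [set y | ~ (C x <-> C y)] = ~` C.
    apply/seteqP; split => y /=; first by move=> h hy; apply: h; split.
    by move=> hy [h _]; exact: hy (h hx).
  by split => //; exact: closed_openC.
have -> : [set y | C y <-> C x] = ~` C.
  apply/seteqP; split => y /=; first by move=> [h _] hy; exact: hx (h hy).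
  by move=> hy; split => // /hx.
have -> : [set y | ~ (C x <-> C y)] = C.
  apply/seteqP; split => y /=.
    by move=> h; apply: contrapT => hy; apply: h; split => // /hx.
  by move=> hy [_ h]; exact: hx (h hy).
by split => //; exact: closed_openC.
Qed.

From Stdlib Require Import Rbase Lra.
From Stdlib Require Rtrigo_def.

Lemma metric_from (X : topologicalType) (Cn : nat -> set X) : compact [set: X] ->
  (forall n, open (Cn n) /\ closed (Cn n)) ->
  (forall a b, a <> b -> exists n, Cn n a /\ ~ Cn n b) -> metrizable_space X.
Proof.
move=> cX hC hsep.
pose m a b := mind (fun n => sepn Cn n a b).
have mP : forall a b, a <> b -> sepn Cn (m a b) a b /\
    forall k, sepn Cn k a b -> (m a b <= k)%N.
  move=> a b ab; have [n [ha nb]] := hsep a b ab.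
  have sn : sepn Cn n a b by move=> [h _]; exact: nb (h ha).
  split; first exact: (@mindP (fun n => sepn Cn n a b) n sn).1.
  by move=> k sk; exact: (@mindP (fun n => sepn Cn n a b) k sk).2.
have msym : forall a b, m a b = m b a.
  move=> a b; rewrite /m.
  have -> : (fun n => sepn Cn n a b) = (fun n => sepn Cn n b a) => //.
  apply/funext => n; apply/propext; rewrite /sepn; split => h h'; apply: h; tauto.
pose d (a b : X) : R := if pselect (a = b) then 0%R else (/ (INR (m a b) + 1))%R.
have pos : forall k, (0 < / (INR k + 1))%R.
  by move=> k; apply: Rinv_0_lt_compat; have := pos_INR k; lra.
have invle : forall i j, (i <= j)%N -> (/ (INR j + 1) <= / (INR i + 1))%R.
  move=> i j /ssrnat.leP h; apply: Rinv_le_contravar; first by have := pos_INR i; lra.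
  by have := le_INR _ _ h; lra.
have dE : forall a b, a <> b -> d a b = (/ (INR (m a b) + 1))%R.
  by move=> a b ab; rewrite /d; case: pselect.
have dE0 : forall a, d a a = 0%R by move=> a; rewrite /d; case: pselect.
have d0 : forall a b, (0 <= d a b)%R.
  move=> a b; case: (pselect (a = b)) => [->|ab]; first by rewrite dE0; lra.
  by rewrite dE //; apply: Rlt_le.
exists d; split => //; split.
  move=> a b; case: (pselect (a = b)) => [->|ab]; first by rewrite dE0.
  by rewrite dE //; split => // h; have := pos (m a b); lra.
split.
  move=> a b; case: (pselect (a = b)) => [->//|ab].
  by rewrite (dE a b ab) (dE b a (fun e => ab (esym e))) msym.
split.
  move=> a b c; case: (pselect (a = c)) => [->|ac].
    by rewrite dE0; have := d0 c b; have := d0 b c; lra.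
  case: (pselect (a = b)) => [<-|ab]; first by rewrite dE0; lra.
  case: (pselect (b = c)) => [<-|bc]; first by rewrite dE0; lra.
  rewrite !dE //.
  have [k1|k2] : (m a b <= m a c)%N \/ (m b c <= m a c)%N.
    have [s _] := mP a c ac.
    case: (pselect (sepn Cn (m a c) a b)) => h1; first by left; exact: (mP a b ab).2.
    case: (pselect (sepn Cn (m a c) b c)) => h2; first by right; exact: (mP b c bc).2.
    exfalso; apply: s; have h1' := contrapT h1; have h2' := contrapT h2; tauto.
    have := invle _ _ k1; have := pos (m b c); lra.
  have := invle _ _ k2; have := pos (m a b); lra.
move=> A; split.
  move=> oA x Ax.
  have ccA : compact (~` A).
    by apply: (subclosed_compact (open_closedC oA) cX).
  pose G n := [set y | sepn Cn n x y].
  have oG : forall n, open (G n) by move=> n; exact: (clopen_iff x (hC n).1 (hC n).2).2.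
  have := cover_of x ccA => /(_ nat setT G).
  case => [n _|z nAz|D' _ cov]; first exact: oG.
    have zx : x <> z by move=> e; apply: nAz; rewrite -e.
    by exists (m x z) => //; exact: (mP x z zx).1.
  have [N hN] := seq_bound (finmap.enum_fset D').
  exists (/ (INR N + 1))%R; split; first exact: pos.
  move=> y /= dy; case: (pselect (x = y)) => [<-//|xy].
  apply: contrapT => nAy; have [n D'n Gny] := cov y nAy.
  have h1 := (mP x y xy).2 n Gny.
  have h2 : (n <= N)%N by apply: hN.
  have := invle _ _ (leq_trans h1 h2); move: dy; rewrite dE //; lra.
move=> hb; rewrite openE => x Ax.
have [e [e0 sub]] := hb x Ax.
have [N [hN N0]] := Rtrigo_def.archimed_cor1 e e0.
pose B (K : nat) := [set y | forall n, (n <= K)%N -> (Cn n y <-> Cn n x)].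
have oB : forall K, open (B K).
  elim => [|K IH].
    have -> : B 0%N = [set y | Cn 0%N y <-> Cn 0%N x].
      apply/seteqP; split => y /=; first by apply.
      by move=> h n; rewrite leqn0 => /eqP ->.
    exact: (clopen_iff x (hC 0%N).1 (hC 0%N).2).1.
  have -> : B K.+1 = B K `&` [set y | Cn K.+1 y <-> Cn K.+1 x].
    apply/seteqP; split => y /=.
      by move=> h; split; [move=> n hn; apply: h; apply: leqW | apply: h].
    move=> [h1 h2] n; rewrite leq_eqVlt => /orP [/eqP -> //|].
    by rewrite ltnS; apply: h1.
  apply: openI => //; exact: (clopen_iff x (hC _).1 (hC _).2).1.
have BA : B N `<=` A.
  move=> y By; case: (pselect (x = y)) => [<-//|xy]; apply: sub => /=.
  rewrite dE //.
  have mN : (N < m x y)%N.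
    rewrite ltnNge; apply/negP => h; apply: (mP x y xy).1.
    by have := By _ h; tauto.
  have h1 : (INR N < INR (m x y) + 1)%R.
    by have := le_INR _ _ (ssrnat.leP (ltnW mN)); lra.
  have h0 : (0 < INR N)%R by apply: lt_0_INR.
  have := Rinv_lt_contravar (INR N) (INR (m x y) + 1)
    (Rmult_lt_0_compat _ _ h0 (Rlt_trans _ _ _ h0 h1)) h1.
  lra.
apply: (filterS BA); apply: open_nbhs_nbhs; split => //.
Qed.

Unset Implicit Arguments.

Theorem mainTheorem13 (X : topologicalType) :
  tychonoff_space X -> hered_meta_lindelof X -> compact [set: X] -> scattered X ->
  countable_height X ->
  forall (P : Type) (le : P -> P -> Prop),
    directed_set le -> calibre_w1_w le -> has_Pbase X le ->
  countable [set: X] /\ metrizable_space X.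
Proof.
move=> tX hml cX sc _ P le _ cal hPb.
have cnt := countable_main tX.1 hml cX sc cal hPb.
split => //.
have [Cn [hC hs]] := sep_family tX cnt.
exact: metric_from cX hC hs.
Qed.
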